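(* For each random context grammar $G$ there is a random context grammar $G'$ with $L(G')=L(G)$ such that every production $(A\to x,\mathit{Per},\mathit{For})$ of $G'$ satisfies $A\notin\mathit{For}$.
   Context: For an alphabet $V$, $V^+=V^*-\{\lambda\}$, and $\mathit{alph}(w)$ is the set of symbols occurring in $w$. A random context grammar is a quadruple $G=(N,T,P,S)$ where $N$ and $T$ are disjoint finite alphabets of nonterminals and terminals, $V=N\cup T$, $S\in N$, and $P$ is a finite set of productions $(A\to x,\mathit{Per},\mathit{For})$ with $A\in N$, $x\in V^+$ (no erasing productions), $\mathit{Per},\mathit{For}\subseteq N$. For $u,v\in V^*$, $uAv\Rightarrow uxv$ holds if $\mathit{Per}\subseteq\mathit{alph}(uv)$ and $\mathit{alph}(uv)\cap\mathit{For}=\emptyset$. $L(G)=\{w\in T^*:S\Rightarrow^*w\}$. *)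

(* Defs.v *)
From mathcomp Require Import all_boot.
From Stdlib Require Import Relations.
From Stdlib Require List.
Set Implicit Arguments. Unset Strict Implicit. Unset Printing Implicit Defensive.

(* Symbols of V = N ∪ T: the disjoint union N + T (inl = nonterminal, inr = terminal). *)
Definition sym (N T : finType) := (N + T)%type.

Record production (N T : finType) := Production {
  lhs : N;
  rhs : seq (sym N T);
  per : {set N};
  forb : {set N} }.

Record rcg (N T : finType) := RCG {
  prods : seq (production N T);
  start : N }.

Definition rcg_wf (N T : finType) (G : rcg N T) : Prop :=
  forall p, List.In p (prods G) -> rhs p <> [::].

Definition alphN (N T : finType) (w : seq (sym N T)) : {set N} :=
  [set A | inl A \in w].

Definition step (N T : finType) (G : rcg N T) (s t : seq (sym N T)) : Prop :=
  exists p u v, [/\ List.In p (prods G),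
    s = u ++ inl (lhs p) :: v,
    t = u ++ rhs p ++ v,
    per p \subset alphN (u ++ v) &
    [disjoint alphN (u ++ v) & forb p]].

Definition derives (N T : finType) (G : rcg N T) := clos_refl_trans _ (step G).

Definition lang (N T : finType) (G : rcg N T) (w : seq T) : Prop :=
  derives G [:: inl (start G)] (map inr w).

(* Main.v *)
Require Import Defs.
From mathcomp Require Import all_boot.
From Stdlib Require Import Relations.
Set Implicit Arguments. Unset Strict Implicit. Unset Printing Implicit Defensive.

Lemma disjP (X : finType) (A B : {set X}) :
  (forall x, x \in A -> x \in B -> False) -> [disjoint A & B].
Proof.
move=> H; rewrite disjoint_subset; apply/subsetP => x Hx; rewrite inE.
by apply/negP => Hb; apply: (H x).
Qed.

Lemma mem_In (X : eqType) (x : X) s : x \in s -> List.In x s.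
Proof.
elim: s => //= y s IH; rewrite in_cons => /orP [/eqP ->|H]; [by left|by right; apply IH].
Qed.

Lemma size_len (X : Type) (s : seq X) : List.length s = size s.
Proof. by elim: s => //= _ s ->. Qed.

Section Constr.
Variables (N T : finType) (G : rcg N T).

Notation k := (size (prods G)).
Notation NN := (N + 'I_k)%type.

Definition p0 : production N T := Production (start G) [::] set0 set0.
Definition pi (i : 'I_k) := List.nth i (prods G) p0.
Definition iota_s (X : sym N T) : sym NN T :=
  match X with inl A => inl (inl A) | inr t => inr t end.
Definition pi_s (X : sym NN T) : sym N T :=
  match X with inl (inl A) => inl A | inl (inr i) => inl (lhs (pi i)) | inr t => inr t end.
Definition nm (X : sym NN T) : bool :=
  match X with inl (inr _) => false | _ => true end.

Definition s1 i : production NN T :=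
  Production (inl (lhs (pi i))) [:: inl (inr i)]
    [set X : NN | match X with inl B => B \in per (pi i) | inr _ => false end]
    [set X : NN | match X with inl B => B \in forb (pi i) :\ lhs (pi i) | inr _ => true end].
Definition s2 i : production NN T :=
  Production (inr i) (map iota_s (rhs (pi i))) set0
    [set X : NN | match X with inl B => (B \in forb (pi i)) && (B == lhs (pi i)) | inr _ => false end].
Definition G' : rcg NN T :=
  RCG (List.flat_map (fun i => [:: s1 i; s2 i]) (enum 'I_k)) (inl (start G)).

Lemma In_G' p : List.In p (prods G') <-> exists i, p = s1 i \/ p = s2 i.
Proof.
rewrite /= List.in_flat_map; split.
- case=> i [_ /= [<-|[<-|[]]]]; exists i; by [left|right].
- case=> i H; exists i; split; first by apply: mem_In; rewrite mem_enum.
  by case: H => ->; [left|right; left].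
Qed.

Lemma pi_iota w : map pi_s (map iota_s w) = w.
Proof. by elim: w => //= [[A|t]] w ->. Qed.

Lemma nm_iota w : all nm (map iota_s w).
Proof. by elim: w => //= [[A|t]] w ->. Qed.

Lemma mem_iota A w : (inl (inl A) \in map iota_s w) = (inl A \in w).
Proof. by elim: w => //= [[B|t]] w IH; rewrite !in_cons IH. Qed.

Lemma mem_iotaM j w : (inl (inr j) \in map iota_s w) = false.
Proof. by elim: w => //= [[B|t]] w IH; rewrite !in_cons IH. Qed.

Lemma alph_pi w A : all nm w -> (inl A \in map pi_s w) = (inl (inl A) \in w).
Proof.
elim: w => //= x w IH /andP [hx hw]; rewrite !in_cons IH //.
by case: x hx => [[B|j]|t].
Qed.

Definition cond i (w : seq (sym N T)) :=
  per (pi i) \subset alphN w /\ [disjoint alphN w & forb (pi i) :\ lhs (pi i)].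

Definition Inv (s : seq (sym NN T)) :=
  forall u v i, s = u ++ inl (inr i) :: v -> all nm (u ++ v) /\ cond i (map pi_s (u ++ v)).

Lemma Inv_nm s : all nm s -> Inv s.
Proof. by move=> H u v i E; move: H; rewrite E all_cat /= andbF. Qed.

Lemma uniq_dec u1 v1 u2 v2 i j : all nm u1 -> all nm v1 ->
  u1 ++ inl (inr i) :: v1 = u2 ++ inl (inr j) :: v2 -> [/\ u1 = u2, i = j & v1 = v2].
Proof.
elim: u1 u2 => [|x u1 IH] [|y u2] //= hu hv.
- by case=> -> ->.
- case=> <- E; move: hv; by rewrite E all_cat /= andbF.
- by case=> E; move: hu; rewrite E.
- case=> -> E; case/andP: hu => _ hu; by case: (IH u2 hu hv E) => -> -> ->.
Qed.

Lemma step_back s t : step G' s t -> Inv s ->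
  Inv t /\ derives G (map pi_s s) (map pi_s t).
Proof.
case=> p [u] [v] [Hin -> -> Hper Hdis] Hs.
case/In_G': Hin => i [Ep|Ep]; subst p => /=.
- have nmuv : all nm (u ++ v).
    apply/allP => X HX; case: X HX => [[B|j]|t'] // HX.
    have HX' : inr j \in alphN (u ++ v) by rewrite inE.
    by move: (disjointFr Hdis HX'); rewrite inE.
  have [nmu nmv] : all nm u /\ all nm v by move: nmuv; rewrite all_cat => /andP.
  split.
  + move=> u' v' j E; case: (uniq_dec nmu nmv E) => <- <- <-; split=> //; split.
    * apply/subsetP => B HB; rewrite inE alph_pi //.
      have: inl B \in per (s1 i) by rewrite /= inE.
      by move/(subsetP Hper); rewrite inE.
    * apply: disjP => B; rewrite inE alph_pi // => HB HF.
      have HB' : inl B \in alphN (u ++ v) by rewrite inE.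
      by move: (disjointFr Hdis HB'); rewrite /= inE HF.
  + rewrite !map_cat /=; exact: rt_refl.
- have [nmuv [Cp Cd]] := Hs u v i erefl.
  have [nmu nmv] : all nm u /\ all nm v by move: nmuv; rewrite all_cat => /andP.
  split.
  + apply: Inv_nm; rewrite !all_cat nmu nmv nm_iota //.
  + apply: rt_step; exists (pi i), (map pi_s u), (map pi_s v); split.
    * apply: List.nth_In; rewrite size_len; apply/ltP; exact: ltn_ord.
    * by rewrite map_cat.
    * by rewrite !map_cat pi_iota.
    * by rewrite -map_cat.
    * rewrite -map_cat; apply: disjP => B HB HF.
      case: (eqVneq B (lhs (pi i))) => [EB|NB].
      -- move: HB; rewrite inE alph_pi // => HB.
         have HB' : inl B \in alphN (u ++ v) by rewrite inE.
         by move: (disjointFr Hdis HB'); rewrite /= inE HF EB eqxx.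
      -- have HF' : B \in forb (pi i) :\ lhs (pi i) by rewrite !inE NB HF.
         by move: (disjointFr Cd HB); rewrite HF'.
Qed.

Lemma derives_back s t : derives G' s t -> Inv s ->
  Inv t /\ derives G (map pi_s s) (map pi_s t).
Proof.
elim=> {s t} [s t H|s|s t r _ IH1 _ IH2] Hs.
- exact: step_back.
- by split=> //; apply: rt_refl.
- have [It D1] := IH1 Hs; have [Ir D2] := IH2 It; split=> //; exact: rt_trans D1 D2.
Qed.

Lemma step_fwd s t : step G s t -> derives G' (map iota_s s) (map iota_s t).
Proof.
case=> p [u] [v] [Hin -> -> Hper Hdis].
have [n [Hn Hp]] := List.In_nth _ _ p0 Hin.
rewrite size_len in Hn; move/ltP: Hn => Hn.
pose i := Ordinal Hn.
have Ep : pi i = p by [].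
apply: (@rt_trans _ _ _ (map iota_s u ++ inl (inr i) :: map iota_s v)); apply: rt_step.
- exists (s1 i), (map iota_s u), (map iota_s v); split.
  + apply/In_G'; exists i; by left.
  + by rewrite map_cat /= Ep.
  + by [].
  + apply/subsetP => [[B|j]]; rewrite /= !inE // Ep => HB.
    by rewrite -map_cat mem_iota; move: (subsetP Hper B HB); rewrite inE.
  + apply: disjP => [[B|j]]; rewrite /= !inE -map_cat ?mem_iotaM // mem_iota Ep => HB.
    case/andP => _ HF.
    have HB' : B \in alphN (u ++ v) by rewrite inE.
    by move: (disjointFr Hdis HB'); rewrite HF.
- exists (s2 i), (map iota_s u), (map iota_s v); split.
  + apply/In_G'; exists i; by right.
  + by [].
  + by rewrite /= !map_cat Ep.
  + by rewrite sub0set.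
  + apply: disjP => [[B|j]]; rewrite /= !inE -map_cat ?mem_iotaM // mem_iota Ep => HB.
    case/andP => HF _.
    have HB' : B \in alphN (u ++ v) by rewrite inE.
    by move: (disjointFr Hdis HB'); rewrite HF.
Qed.

Lemma derives_fwd s t : derives G s t -> derives G' (map iota_s s) (map iota_s t).
Proof.
elim=> {s t} [s t H|s|s t r _ IH1 _ IH2].
- exact: step_fwd.
- exact: rt_refl.
- exact: rt_trans IH1 IH2.
Qed.

End Constr.

Theorem lemma1 (N T : finType) (G : rcg N T) :
  rcg_wf G ->
  exists (N' : finType) (G' : rcg N' T),
    [/\ rcg_wf G',
        (forall p, List.In p (prods G') -> lhs p \notin forb p) &
        (forall w : seq T, lang G' w <-> lang G w)].
Proof.
move=> Hwf; exists (N + 'I_(size (prods G)))%type, (G' G); split.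
- move=> p /In_G' [i [->|->]] //=.
  have := Hwf (pi i) (List.nth_In _ _ _); rewrite size_len => /(_ (elimT ltP (ltn_ord i))).
  by case: (rhs (pi i)).
- move=> p /In_G' [i [->|->]] /=; rewrite !inE //.
  by rewrite eqxx.
- move=> w; rewrite /lang; split.
  + move=> H; have I0 : Inv (G := G) [:: inl (start (G' G))] by apply: Inv_nm.
    have [_ D] := derives_back H I0.
    by move: D; rewrite -map_comp.
  + move=> H; have := derives_fwd H; by rewrite -map_comp.
Qed.
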